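(* Let $\Re$ be a finite commutative Frobenius ring which is the Chinese product of finite commutative local Frobenius rings $R_1,\dots,R_s$, i.e. $\Re\cong R_1\times\cdots\times R_s$ via the Chinese Remainder Theorem isomorphism $\Phi$. Let $\{C,D\}$ be a pair of linear codes of length $n$ over $\Re$ with $C=\texttt{CRT}(C_1,\dots,C_s)$ and $D=\texttt{CRT}(D_1,\dots,D_s)$, where $C_i,D_i$ are linear codes of length $n$ over $R_i$. If for each $1\le i\le s$ the pair $\{C_i,D_i\}$ is an $\ell$-DLIP of codes over $R_i$, then $\{C,D\}$ is an $\ell$-DLIP of codes over $\Re$.
   Context: A linear code of length $n$ over a finite commutative ring is a submodule of the $n$-fold free module. Let $R_j$ have residue field $\mathbb{F}_{q_j}$, and let $\Phi=(\Phi_1,\dots,\Phi_s):\Re\to R_1\times\cdots\times R_s$ be the ring isomorphism given by the Chinese Remainder Theorem, extended coordinatewise to $\Re^n\to R_1^n\times\cdots\times R_s^n$. For linear codes $C_j\subseteq R_j^n$, $\texttt{CRT}(C_1,\dots,C_s):=\Phi^{-1}(C_1\times\cdots\times C_s)$. For a linear code $C_j$ over the local ring $R_j$, $\dim(C_j):=\log_{q_j}|C_j|$; for a linear code $C$ over $\Re$, setting $Q=\prod_{j=1}^s q_j$, $\dim(C):=\log_Q|C|$ (equivalently $\sum_j \frac{\ln q_j}{\ln Q}\dim(\Phi_j(C))$). For a nonnegative integer $\ell$, a pair $\{C,D\}$ of linear codes of length $n$ is an $\ell$-dimension linear intersection pair ($\ell$-DLIP) if $\dim(C\cap D)=\ell$.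 *)

(* Defs.v *)
From HB Require Import structures.
From Stdlib Require Import Reals.
From mathcomp Require Import all_boot all_order all_algebra.
Set Implicit Arguments. Unset Strict Implicit. Unset Printing Implicit Defensive.
Import GRing.Theory.
Local Open Scope ring_scope.

Definition is_ideal (R : finComNzRingType) (I : {set R}) : bool :=
  [&& 0 \in I, [forall x in I, forall y in I, x + y \in I],
      [forall x in I, - x \in I] & [forall r : R, forall x in I, r * x \in I]].

Definition is_maximal_ideal (R : finComNzRingType) (M : {set R}) : bool :=
  [&& is_ideal M, M != [set: R] &
      [forall J : {set R}, (is_ideal J && (M \subset J)) ==> ((J == M) || (J == [set: R]))]].

Definition is_minimal_ideal (R : finComNzRingType) (I : {set R}) : bool :=
  [&& is_ideal I, I != [set 0] &
      [forall J : {set R}, (is_ideal J && (J \subset I)) ==> ((J == [set 0]) || (J == I))]].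

Definition is_local (R : finComNzRingType) : Prop :=
  exists M : {set R}, is_maximal_ideal M /\
    forall M' : {set R}, is_maximal_ideal M' -> M' = M.

(* a finite commutative local ring is Frobenius iff it has a unique minimal ideal *)
Definition is_local_frobenius (R : finComNzRingType) : Prop :=
  is_local R /\
  exists I : {set R}, is_minimal_ideal I /\
    forall I' : {set R}, is_minimal_ideal I' -> I' = I.

Definition max_ideal (R : finComNzRingType) : {set R} :=
  odflt set0 [pick M : {set R} | is_maximal_ideal M].

(* q = |R / m|, the cardinality of the residue field F_q *)
Definition residue_card (R : finComNzRingType) : nat :=
  divn #|[set: R]| #|max_ideal R|.

Definition is_linear_code (R : finComNzRingType) (n : nat) (C : {set 'rV[R]_n}) : Prop :=
  0 \in C /\ (forall x y, x \in C -> y \in C -> x + y \in C) /\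
  (forall (r : R) x, x \in C -> r *: x \in C).

Definition dim_local (R : finComNzRingType) (n : nat) (C : {set 'rV[R]_n}) : Rdefinitions.R :=
  Rdiv (ln (INR #|C|)) (ln (INR (residue_card R))).

Definition dim_crt (s : nat) (R : 'I_s -> finComNzRingType)
  (Re : finComNzRingType) (n : nat) (C : {set 'rV[Re]_n}) : Rdefinitions.R :=
  Rdiv (ln (INR #|C|)) (ln (INR (\prod_(j < s) residue_card (R j))%N)).

Definition CRT (s : nat) (R : 'I_s -> finComNzRingType) (Re : finComNzRingType)
  (Phi : forall j, {rmorphism Re -> R j}) (n : nat)
  (Cs : forall j, {set 'rV[R j]_n}) : {set 'rV[Re]_n} :=
  [set c : 'rV[Re]_n | [forall j, map_mx (Phi j) c \in Cs j]].

(* Phi = (Phi_1,...,Phi_s) is a ring isomorphism Re -> R_1 x ... x R_s *)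
Definition is_crt_iso (s : nat) (R : 'I_s -> finComNzRingType) (Re : finComNzRingType)
  (Phi : forall j, {rmorphism Re -> R j}) : Prop :=
  (forall x y : Re, (forall j, Phi j x = Phi j y) -> x = y) /\
  (forall f : forall j, R j, exists x : Re, forall j, Phi j x = f j).

(* Main.v *)
Require Import Defs.
From Stdlib Require Import Reals Lra.
From mathcomp Require Import all_boot all_order all_algebra.
Set Implicit Arguments. Unset Strict Implicit. Unset Printing Implicit Defensive.
Import GRing.Theory.

Lemma residue_card_ge2 (R : finComNzRingType) : is_local R -> (2 <= residue_card R)%N.
Proof.
move=> [M [HM _]].
have : is_maximal_ideal (max_ideal R).
  rewrite /max_ideal; case: pickP => [M' HM'|/(_ M)]; first by [].
  by rewrite HM.
case/and3P=> /and4P[I0 /forallP IA /forallP IN _] Hne _.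
set N := max_ideal R in I0 IA IN Hne *.
have [a naN] : exists a, a \notin N.
  case: (pickP (fun a => a \notin N)) => [a Ha|Hn]; first by exists a.
  exfalso; move/eqP: Hne; apply; apply/setP=> x; rewrite inE.
  by have := Hn x => /= /negbFE.
have c1 : (0 < #|N|)%N by apply/card_gt0P; exists 0%R.
have cT : (#|N| + #|N| <= #|[set: R]|)%N.
  pose aN := [set (a + x)%R | x in N].
  have caN : #|aN| = #|N| by apply: card_imset; apply: addrI.
  have dis : N :&: aN = set0.
    apply/setP=> y; rewrite !inE; apply/negP=> /andP[yN /imsetP[x xN yE]].
    move: yN; rewrite yE => yN.
    have := IA (a + x)%R; rewrite yN /= => /forallP/(_ (- x)%R).
    have := IN x; rewrite xN /= => -> /=.
    by rewrite addrK (negbTE naN).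
  rewrite -{2}caN -cardsUI dis cards0 addn0.
  by rewrite cardsT max_card.
rewrite /residue_card; rewrite leq_divRL //; by rewrite mul2n -addnn.
Qed.

Lemma card_crt (s : nat) (R : 'I_s -> finComNzRingType)
  (Re : finComNzRingType) (Phi : forall j, {rmorphism Re -> R j})
  (n : nat) (S : forall j, {set 'rV[R j]_n}) :
  is_crt_iso Phi ->
  #|[set c : 'rV[Re]_n | [forall j, map_mx (Phi j) c \in S j]]| = (\prod_(j < s) #|S j|)%N.
Proof.
move=> [Hinj Hsurj].
pose F (c : 'rV[Re]_n) : {dffun forall j, 'rV[R j]_n} := [ffun j => map_mx (Phi j) c].
have Finj : injective F.
  move=> c d /ffunP E; apply/matrixP=> i k; apply: Hinj => j.
  by have := E j; rewrite !ffunE => /matrixP/(_ i k); rewrite !mxE.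
rewrite -(card_imset _ Finj).
have -> : F @: [set c | [forall j, map_mx (Phi j) c \in S j]] =
          [set g : {dffun forall j, 'rV[R j]_n} | g \in (family (fun j => mem (S j)) : simpl_pred {dffun forall j, 'rV[R j]_n})].
  apply/setP=> g; rewrite inE; apply/imsetP/familyP => [[c] | Hg].
    by rewrite inE => /forallP Hc -> j; rewrite ffunE; apply: Hc.
  pose pre (i : 'I_1) (k : 'I_n) := odflt 0%R [pick x : Re | [forall j, Phi j x == g j i k]].
  have preE i k j : Phi j (pre i k) = g j i k.
    rewrite /pre; case: pickP => [x /forallP /(_ j) /eqP //|].
    have [x Hx] := Hsurj (fun j => g j i k) => /(_ x).
    by move/negP; case; apply/forallP => j'; rewrite Hx.
  exists (\matrix_(i, k) pre i k)%R.
    rewrite inE; apply/forallP => j.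
    have -> : map_mx (Phi j) (\matrix_(i, k) pre i k)%R = g j.
      by apply/matrixP => i k; rewrite !mxE preE.
    exact: Hg.
  by apply/ffunP => j; rewrite ffunE; apply/matrixP => i k; rewrite !mxE preE.
rewrite cardsE card_family.
by rewrite foldrE big_map big_enum.
Qed.

Section Reals.
Local Open Scope R_scope.
Lemma ln_pos_nat (m : nat) : (1 < m)%N -> (0 < ln (INR m)).
Proof.
move=> H; rewrite -ln_1; apply: ln_increasing; first by apply: Rlt_0_1.
by apply: lt_1_INR; apply/ltP.
Qed.

Lemma ln_prod_lemma (I : Type) (r : seq I) (a q : I -> nat) (L : R) :
  (forall j, 0 < a j)%N -> (forall j, 0 < q j)%N ->
  (forall j, ln (INR (a j)) = L * ln (INR (q j))) ->
  ln (INR (\prod_(j <- r) a j)%N) = (L * ln (INR (\prod_(j <- r) q j)%N)).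
Proof.
move=> Ha Hq He; elim: r => [|x r IH].
  by rewrite !big_nil /= ln_1 Rmult_0_r.
have pos (f : I -> nat) : (forall j, 0 < f j)%N -> (0 < INR (\prod_(j <- r) f j)%N).
  move=> Hf; apply: lt_0_INR; apply/ltP; rewrite prodn_gt0 // => j; exact: Hf.
have pos1 (m : nat) : (0 < m)%N -> (0 < INR m) by move=> Hm; apply: lt_0_INR; apply/ltP.
rewrite !big_cons.
have -> : forall u v : nat, (u * v)%N = Nat.mul u v by [].
rewrite !mult_INR !ln_mult; first (rewrite He; set A := ln _ in IH *; set B := ln _ in IH *; lra).
all: try (apply: pos1; by []).
all: try (apply: pos; by []).
Qed.
End Reals.

Theorem proposition3p2 (s : nat) (R : 'I_s -> finComNzRingType)
  (Re : finComNzRingType) (Phi : forall j, {rmorphism Re -> R j})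
  (n l : nat) (Cs Ds : forall j, {set 'rV[R j]_n}) :
  is_crt_iso Phi ->
  (forall j, is_local_frobenius (R j)) ->
  (forall j, is_linear_code (Cs j)) ->
  (forall j, is_linear_code (Ds j)) ->
  (forall j, dim_local (Cs j :&: Ds j) = INR l) ->
  dim_crt R (CRT Phi Cs :&: CRT Phi Ds) = INR l.
Proof.
move=> Hiso Hloc HC HD Hdim.
have q2 j : (2 <= residue_card (R j))%N by apply: residue_card_ge2; case: (Hloc j).
have a1 j : (0 < #|Cs j :&: Ds j|)%N.
  apply/card_gt0P; exists 0%R; rewrite inE; case: (HC j) => -> _; by case: (HD j) => -> _.
have lnq j : Rlt R0 (ln (INR (residue_card (R j)))) by apply: ln_pos_nat; exact: q2 j.
have He j : ln (INR #|Cs j :&: Ds j|) = Rmult (INR l) (ln (INR (residue_card (R j)))).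
  have := Hdim j; rewrite /dim_local /Rdiv => <-.
  rewrite Rmult_assoc Rinv_l ?Rmult_1_r //; apply: Rgt_not_eq; exact: lnq j.
have s0 : (0 < s)%N.
  case: s R Phi Cs Ds Hiso {Hloc HC HD Hdim q2 a1 lnq He} => // R Phi Cs Ds [Hinj _].
  have : (0 : Re)%R = 1%R by apply: Hinj => -[].
  by move/eqP; rewrite eq_sym oner_eq0.
have -> : CRT Phi Cs :&: CRT Phi Ds =
          [set c : 'rV[Re]_n | [forall j, map_mx (Phi j) c \in Cs j :&: Ds j]].
  apply/setP=> c; rewrite !inE; apply/andP/forallP => [[/forallP H1 /forallP H2] j|H].
    by rewrite inE H1 H2.
  by split; apply/forallP => j; have := H j; rewrite inE => /andP[].
rewrite /dim_crt card_crt //.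
rewrite (@ln_prod_lemma _ (index_enum _) _ _ (INR l) a1 (fun j => ltnW (q2 j)) He).
have Q2 : (1 < \prod_(j < s) residue_card (R j))%N.
  rewrite (bigD1 (Ordinal s0)) //=.
  apply: (leq_trans (q2 (Ordinal s0))); rewrite leq_pmulr // prodn_gt0 // => j.
  exact: ltnW (q2 j).
have := ln_pos_nat Q2; move: (ln _) => x Hx.
rewrite /Rdiv Rmult_assoc Rinv_r ?Rmult_1_r //; exact: Rgt_not_eq.
Qed.
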